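(* Let $\mathcal{G}$ be a group prevariety over a finite alphabet $A$. Then $\mathrm{FO}(\mathbb{I}_{\mathcal{G}}) = \mathrm{FO}(<,\mathbb{P}_{\mathcal{G}})$.
   Context: Fix a finite alphabet $A$. A prevariety is a class of regular languages over $A$ containing $\emptyset$ and $A^*$, closed under union, intersection, complement, and under the quotients $u^{-1}L=\{w\mid uw\in L\}$ and $Lu^{-1}=\{w\mid wu\in L\}$. A group prevariety is a prevariety all of whose languages are recognized by morphisms into finite groups. A word $w=a_1\cdots a_n$ is viewed as a structure with domain $\{0,\dots,n+1\}$; positions $1,\dots,n$ are labeled $a_1,\dots,a_n$, and $0,n+1$ are unlabeled; for $i<j$, $w(i,j)=a_{i+1}\cdots a_{j-1}$. First-order formulas use variables over positions, constants $\mathit{min},\mathit{max}$ (interpreted as $0$ and $n+1$), equality, the predicates of the signature, Boolean connectives and quantifiers. Label predicates $a(x)$ ($a\in A$) hold iff position $x$ has label $a$. For a set $\mathbb{S}$ of predicates, $\mathrm{FO}(\mathbb{S})$ is the class of languages defined by first-order sentences over the label predicates and $\mathbb{S}$. Here $<$ is the linear order on positions; $\mathbb{I}_{\mathcal{G}}$ contains, for each $L\in\mathcal{G}$, a binary predicate $I_L$ with $I_L(i,j)$ true iff $i<j$ and $w(i,j)\in L$; $\mathbb{P}_{\mathcal{G}}$ contains, for each $L\in\mathcal{G}$, a unary predicate $P_L$ with $P_L(i)$ true iff $0<i$ and $w(0,i)\in L$. *)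

(* Defs.v *)
From mathcomp Require Import all_boot all_fingroup.
Set Implicit Arguments. Unset Strict Implicit. Unset Printing Implicit Defensive.

Section Words.
Variable A : finType.

Definition lang := seq A -> bool.

Definition regular (L : lang) : Prop :=
  exists (Q : finType) (q0 : Q) (delta : Q -> A -> Q) (F : {set Q}),
    forall w, L w = (foldl delta q0 w \in F).

Definition group_recognized (L : lang) : Prop :=
  exists (gT : finGroupType) (phi : seq A -> gT) (F : {set gT}),
    [/\ phi [::] = 1%g,
        (forall u v, phi (u ++ v) = (phi u * phi v)%g) &
        (forall w, L w = (phi w \in F))].

(* A class of languages is a predicate on languages; being a set of
   languages, it is invariant under extensional equality. *)
Definition prevariety (C : lang -> Prop) : Prop :=
     (forall L1 L2, (forall w, L1 w = L2 w) -> C L1 -> C L2)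
  /\ (forall L, C L -> regular L)
  /\ C (fun _ => false) /\ C (fun _ => true)
  /\ (forall L1 L2, C L1 -> C L2 -> C (fun w => L1 w || L2 w))
  /\ (forall L1 L2, C L1 -> C L2 -> C (fun w => L1 w && L2 w))
  /\ (forall L, C L -> C (fun w => ~~ L w))
  /\ (forall L u, C L -> C (fun w => L (u ++ w)))
  /\ (forall L u, C L -> C (fun w => L (w ++ u))).

Definition group_prevariety (C : lang -> Prop) : Prop :=
  prevariety C /\ (forall L, C L -> group_recognized L).

Inductive term := Var of nat | Min | Max.

Inductive form :=
| FEq  of term & term
| FLab of A & term
| FLt  of term & term
| FI   of lang & term & term
| FP   of lang & term
| FNot of form
| FAnd of form & form
| FOr  of form & form
| FEx  of nat & form
| FAll of nat & form.

(* word w = a_1 ... a_n, positions 0 .. n+1 *)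
Definition eval_term (w : seq A) (env : nat -> nat) (t : term) : nat :=
  match t with Var x => env x | Min => 0 | Max => (size w).+1 end.

Definition update (env : nat -> nat) (x i : nat) : nat -> nat :=
  fun k => if k == x then i else env k.

(* w(i,j) = a_{i+1} ... a_{j-1} for i < j *)
Definition infix_word (w : seq A) (i j : nat) : seq A :=
  take (j.-1 - i) (drop i w).

Fixpoint sat (w : seq A) (env : nat -> nat) (f : form) : Prop :=
  match f with
  | FEq t1 t2 => eval_term w env t1 = eval_term w env t2
  | FLab a t => let i := eval_term w env t in
                [/\ 0 < i, i <= size w & nth a w i.-1 = a]
  | FLt t1 t2 => eval_term w env t1 < eval_term w env t2
  | FI L t1 t2 => let i := eval_term w env t1 in let j := eval_term w env t2 in
                  i < j /\ L (infix_word w i j)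
  | FP L t => let i := eval_term w env t in 0 < i /\ L (infix_word w 0 i)
  | FNot g => ~ sat w env g
  | FAnd g h => sat w env g /\ sat w env h
  | FOr g h => sat w env g \/ sat w env h
  | FEx x g => exists i, i <= (size w).+1 /\ sat w (update env x i) g
  | FAll x g => forall i, i <= (size w).+1 -> sat w (update env x i) g
  end.

Definition term_ok (bnd : seq nat) (t : term) : bool :=
  if t is Var x then x \in bnd else true.

Fixpoint scoped (bnd : seq nat) (f : form) : bool :=
  match f with
  | FEq t1 t2 | FLt t1 t2 | FI _ t1 t2 => term_ok bnd t1 && term_ok bnd t2
  | FLab _ t | FP _ t => term_ok bnd t
  | FNot g => scoped bnd g
  | FAnd g h | FOr g h => scoped bnd g && scoped bnd h
  | FEx x g | FAll x g => scoped (x :: bnd) g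
  end.

Definition sentence (f : form) : bool := scoped [::] f.

Fixpoint in_sig_I (G : lang -> Prop) (f : form) : Prop :=
  match f with
  | FEq _ _ | FLab _ _ => True
  | FLt _ _ | FP _ _ => False
  | FI L _ _ => G L
  | FNot g | FEx _ g | FAll _ g => in_sig_I G g
  | FAnd g h | FOr g h => in_sig_I G g /\ in_sig_I G h
  end.

Fixpoint in_sig_ltP (G : lang -> Prop) (f : form) : Prop :=
  match f with
  | FEq _ _ | FLab _ _ | FLt _ _ => True
  | FI _ _ _ => False
  | FP L _ => G L
  | FNot g | FEx _ g | FAll _ g => in_sig_ltP G g
  | FAnd g h | FOr g h => in_sig_ltP G g /\ in_sig_ltP G h
  end.

(* L is defined by the sentence f (the environment is irrelevant). *)
Definition defines (f : form) (L : lang) : Prop :=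
  sentence f /\ forall w, L w <-> sat w (fun _ => 0) f.

Definition FO_I (G : lang -> Prop) (L : lang) : Prop :=
  exists f, in_sig_I G f /\ defines f L.

Definition FO_ltP (G : lang -> Prop) (L : lang) : Prop :=
  exists f, in_sig_ltP G f /\ defines f L.

End Words.

(* Main.v *)
Require Import Defs.
From mathcomp Require Import all_boot all_fingroup.
From mathcomp Require Import all_solvable zify.
From Stdlib Require Import Classical.

Set Implicit Arguments. Unset Strict Implicit. Unset Printing Implicit Defensive.

Section S.
Variable A : finType.

Definition FF : form A := FLt A Min Min.
Definition bigor (l : seq (form A)) : form A := foldr (@FOr A) FF l.

Lemma sat_bigor (T : eqType) (s : seq T) (F : T -> form A) w env :
  sat w env (bigor (map F s)) <-> exists2 x, x \in s & sat w env (F x).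
Proof.
elim: s => [|x s IH] /=.
  split; [by rewrite /= ltnn | by case].
split.
  case=> [h|/IH [y hy hs]]; first by exists x; rewrite ?mem_head.
  by exists y; rewrite // in_cons hy orbT.
case=> y; rewrite in_cons => /orP [/eqP -> h|hy hs]; first by left.
by right; apply/IH; exists y.
Qed.

Lemma sig_bigor (G : lang A -> Prop) (T : eqType) (s : seq T) (F : T -> form A) :
  (forall x, x \in s -> in_sig_ltP G (F x)) -> in_sig_ltP G (bigor (map F s)).
Proof.
elim: s => [|x s IH] //= H; split; first by apply: H; rewrite mem_head.
by apply: IH => y hy; apply: H; rewrite in_cons hy orbT.
Qed.

Lemma scoped_bigor bnd (T : eqType) (s : seq T) (F : T -> form A) :
  (forall x, x \in s -> scoped bnd (F x)) -> scoped bnd (bigor (map F s)).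
Proof.
elim: s => [|x s IH] //= H; rewrite H ?mem_head //=.
by apply: IH => y hy; apply: H; rewrite in_cons hy orbT.
Qed.

Definition Kl (L : lang A) (R : seq (seq A)) (r : seq A) : lang A :=
  fun w => all (fun p => L (p.1 ++ w ++ p.2) == L (p.1 ++ r ++ p.2))
               [seq (x, y) | x <- R, y <- R].

Definition powr (n : nat) (v : seq A) := flatten (nseq n v).

Definition trI (L : lang A) (R : seq (seq A)) (n : nat) (s t : term) : form A :=
 FOr (FAnd (FEq A s Min) (FAnd (FLt A s t)
        (bigor (map (fun r => FP (Kl L R r) t) [seq r <- R | L r]))))
     (FAnd (FLt A Min s) (FAnd (FLt A s t)
        (bigor (map (fun q => FAnd (FP (Kl L R q.1.1) s)
                      (FAnd (FLab q.1.2 s) (FP (Kl L R q.2) t)))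
          [seq q <- [seq (p, r2) | p <- [seq (r1, a) | r1 <- R, a <- enum A], r2 <- R]
             | L (powr n.-1 (q.1.1 ++ [:: q.1.2]) ++ q.2)])))).

Section Grp.
Variables (gT : finGroupType) (phi : seq A -> gT) (F : {set gT}) (L : lang A)
  (R : seq (seq A)).
Hypotheses (phi0 : phi [::] = 1%g) (phiM : forall u v, phi (u ++ v) = (phi u * phi v)%g)
  (Lphi : forall w, L w = (phi w \in F))
  (HR : forall u, exists2 r, r \in R & phi r = phi u).

Lemma KP r u : Kl L R r u -> forall x y, L (x ++ u ++ y) = L (x ++ r ++ y).
Proof.
move=> /allP H x y.
have [rx rxR ex] := HR x; have [ry ryR ey] := HR y.
have := H (rx, ry) (allpairs_f _ rxR ryR) => /= /eqP.
by rewrite !Lphi !phiM ex ey.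
Qed.

Lemma Kin r u : phi r = phi u -> Kl L R r u.
Proof.
move=> e; apply/allP => p _; apply/eqP.
by rewrite !Lphi !phiM e.
Qed.

Lemma Kex u : exists2 r, r \in R & Kl L R r u.
Proof. by have [r rR e] := HR u; exists r => //; apply: Kin. Qed.

Lemma phi_pow n v : phi (powr n v) = (phi v ^+ n)%g.
Proof.
elim: n => [|n IH]; first by rewrite /powr /= phi0 expg0.
by rewrite /powr /= phiM -/(powr n v) IH expgS.
Qed.

Lemma pow_one v : phi (powr #|gT|.-1 v ++ v) = 1%g.
Proof.
have c0 : 0 < #|gT| by apply/card_gt0P; exists 1%g.
rewrite phiM phi_pow -expgSr prednK //.
have := @expg_cardG _ [set: gT]%G (phi v) (in_setT _).
by rewrite cardsT.
Qed.

Lemma decomp (w : seq A) i j d : 0 < i -> i < j -> i <= size w ->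
  infix_word w 0 j = infix_word w 0 i ++ nth d w i.-1 :: infix_word w i j.
Proof.
move=> i0 ij iw; rewrite /infix_word !subn0 !drop0.
rewrite -{1}(cat_take_drop i w) take_cat size_takel // ifN; last by lia.
rewrite -(prednK i0) (take_nth d); last by lia.
by rewrite cat_rcons.
Qed.

Lemma trI_correct w env s t :
  eval_term w env s <= (size w).+1 -> eval_term w env t <= (size w).+1 ->
  (sat w env (FI L s t) <-> sat w env (trI L R #|gT| s t)).
Proof.
move=> hs ht /=.
set i := eval_term w env s in hs *; set j := eval_term w env t in ht *.
split.
- case=> ij Lw.
  have [i0|ipos] := posnP i.
    left; split=> //; split=> //; apply/sat_bigor.
    have [r rR Kr] := Kex (infix_word w 0 j).
    exists r; first by rewrite mem_filter rR andbT; have := KP Kr [::] [::];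
      rewrite /= !cats0 => <-; rewrite -i0.
    by split=> //; lia.
  right; split=> //; split=> //; apply/sat_bigor.
  have iw : i <= size w by lia.
  have [d _] : exists d : A, True.
    case E: w => [|d ?]; last by exists d.
    by move: iw; rewrite E /=; lia.
  set a := nth d w i.-1.
  have [r1 r1R K1] := Kex (infix_word w 0 i).
  have [r2 r2R K2] := Kex (infix_word w 0 j).
  exists ((r1, a), r2).
    rewrite mem_filter allpairs_f ?allpairs_f ?mem_enum // andbT /=.
    set p := powr _ _.
    have e2 := KP K2 p [::]; rewrite !cats0 in e2; rewrite /= -e2.
    rewrite (decomp d ipos ij iw) -/a.
    have e1 := KP K1 p (a :: infix_word w i j); rewrite e1.
    rewrite Lphi in Lw; rewrite Lphi.
    have := pow_one (r1 ++ [:: a]); rewrite -/p => po.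
    rewrite -cat1s catA catA phiM -catA po mul1g //.
  split; first by split => //; lia.
  split; last by split => //; lia.
  by split=> //; rewrite /a (set_nth_default d) //; lia.
- case.
  + case=> i0 [ij /sat_bigor [r]]; rewrite mem_filter => /andP [Lr rR] [_ Kr].
    split => //; rewrite i0.
    by move: (KP Kr [::] [::]); rewrite /= !cats0 Lr.
  + case=> ipos [ij /sat_bigor [[[r1 a] r2]]]; rewrite mem_filter => /andP [cnd _].
    move=> /= [[_ K1] [[_ iw na] [_ K2]]].
    split=> //.
    have := decomp a ipos ij iw; rewrite na => dec.
    rewrite dec in K2.
    move: cnd => /=; set p := powr _ _.
    have e2 := KP K2 p [::]; rewrite !cats0 in e2; rewrite -e2.
    have e1 := KP K1 p (a :: infix_word w i j); rewrite e1.
    rewrite Lphi; rewrite Lphi.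
    have := pow_one (r1 ++ [:: a]); rewrite -/p => po.
    rewrite -cat1s catA catA phiM -catA po mul1g //.
Qed.

End Grp.

Section Trans.
Variable G : lang A -> Prop.
Hypothesis HG : group_prevariety G.

Lemma G_ext L1 L2 : (forall w, L1 w = L2 w) -> G L1 -> G L2.
Proof. by case: HG => [[H _]] _; apply: H. Qed.

Lemma G_true : G (fun _ => true).
Proof. by case: HG => [[_ [_ [_ [H _]]]]]. Qed.

Lemma G_and L1 L2 : G L1 -> G L2 -> G (fun w => L1 w && L2 w).
Proof. by case: HG => [[_ [_ [_ [_ [_ [H _]]]]]]] _; apply: H. Qed.

Lemma G_neg L1 : G L1 -> G (fun w => ~~ L1 w).
Proof. by case: HG => [[_ [_ [_ [_ [_ [_ [H _]]]]]]]] _; apply: H. Qed.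

Lemma G_quot L x y : G L -> G (fun w => L (x ++ w ++ y)).
Proof.
case: HG => [[_ [_ [_ [_ [_ [_ [_ [Hl Hr]]]]]]]]] _ GL.
apply: (@G_ext (fun w => (fun v => L (v ++ y)) (x ++ w))); first by move=> w /=; rewrite catA.
exact: (Hl (fun v => L (v ++ y)) x (Hr L y GL)).
Qed.

Lemma G_all (T : eqType) (s : seq T) (f : T -> lang A) :
  (forall p, p \in s -> G (f p)) -> G (fun w => all (fun p => f p w) s).
Proof.
elim: s => [|p s IH] H /=; first exact: G_true.
apply: G_and; first by apply: H; rewrite mem_head.
by apply: IH => q hq; apply: H; rewrite in_cons hq orbT.
Qed.

Lemma G_Kl L R r : G L -> G (Kl L R r).
Proof.
move=> GL; apply: G_all => p _.
case: (L (p.1 ++ r ++ p.2)).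
  by apply: (@G_ext (fun w => L (p.1 ++ w ++ p.2))) => [w|]; [rewrite eqb_id | apply: G_quot].
apply: (@G_ext (fun w => ~~ L (p.1 ++ w ++ p.2))) => [w|]; first by rewrite eqbF_neg.
by apply: G_neg; apply: G_quot.
Qed.

Lemma reps (gT : finGroupType) (phi : seq A -> gT) :
  exists R : seq (seq A), forall u, exists2 r, r \in R & phi r = phi u.
Proof.
suff H : forall s : seq gT, exists R : seq (seq A),
    forall u, phi u \in s -> exists2 r, r \in R & phi r = phi u.
  by have [R HR] := H (enum gT); exists R => u; apply: HR; rewrite mem_enum.
elim=> [|g s [R HR]]; first by exists [::].
case: (classic (exists u, phi u = g)) => [[u0 hu0]|hn].
  exists (u0 :: R) => u; rewrite in_cons => /orP [/eqP e|h].
    by exists u0; rewrite ?mem_head // hu0 e.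
  by have [r rR e] := HR u h; exists r; rewrite // in_cons rR orbT.
exists R => u; rewrite in_cons => /orP [/eqP e|h]; last exact: HR.
by case: hn; exists u.
Qed.

Lemma eval_ok bnd (w : seq A) env t : term_ok bnd t ->
  (forall x, x \in bnd -> env x <= (size w).+1) -> eval_term w env t <= (size w).+1.
Proof. by case: t => //= x hx H; apply: H. Qed.

Lemma tr_I (f : form A) : in_sig_I G f -> exists f', in_sig_ltP G f' /\
  forall bnd, scoped bnd f -> scoped bnd f' /\
   forall w env, (forall x, x \in bnd -> env x <= (size w).+1) ->
     (sat w env f <-> sat w env f').
Proof.
elim: f.
- by move=> t1 t2 _; exists (FEq A t1 t2).
- by move=> a t _; exists (FLab a t).
- by [].
- move=> L s t /= GL.
  have [gT [phi [F [phi0 phiM Lphi]]]] : group_recognized L by case: HG => _; apply.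
  have [R HR] := reps phi.
  exists (trI L R #|gT| s t); split.
    rewrite /trI /=; do !split; [apply: sig_bigor => r _ /=; exact: G_Kl |
      apply: sig_bigor => q _ /=; do !split; exact: G_Kl].
  move=> bnd /andP [hs ht]; split.
    rewrite /= hs ht /=; apply/andP; split; first by apply: scoped_bigor => r _ /=.
    by apply: scoped_bigor => q _ /=; rewrite hs ht.
  move=> w env Henv; apply: (trI_correct phi0 phiM Lphi HR); exact: eval_ok Henv.
- by [].
- move=> g IH /IH [g' [sg H]]; exists (FNot g'); split=> // bnd /H [sc E].
  by split=> // w env Hv /=; have := E w env Hv; tauto.
- move=> g IHg h IHh [/IHg [g' [sg Hg]] /IHh [h' [sh Hh]]].
  exists (FAnd g' h'); split=> // bnd /andP [/Hg [sg' Eg] /Hh [sh' Eh]].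
  by split; [rewrite /= sg' sh' | move=> w env Hv /=; have := Eg w env Hv; have := Eh w env Hv; tauto].
- move=> g IHg h IHh [/IHg [g' [sg Hg]] /IHh [h' [sh Hh]]].
  exists (FOr g' h'); split=> // bnd /andP [/Hg [sg' Eg] /Hh [sh' Eh]].
  by split; [rewrite /= sg' sh' | move=> w env Hv /=; have := Eg w env Hv; have := Eh w env Hv; tauto].
- move=> x g IH /IH [g' [sg H]]; exists (FEx x g'); split=> // bnd /H [sc E].
  split=> // w env Hv /=.
  have Hv' : forall i, i <= (size w).+1 -> forall y, y \in x :: bnd ->
      update env x i y <= (size w).+1.
    move=> i hi y; rewrite in_cons /update; case: (y == x) => //= hy; exact: Hv.
  by split; case=> i [hi hs]; exists i; split=> //; apply/(E w _ (Hv' i hi)).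
- move=> x g IH /IH [g' [sg H]]; exists (FAll x g'); split=> // bnd /H [sc E].
  split=> // w env Hv /=.
  have Hv' : forall i, i <= (size w).+1 -> forall y, y \in x :: bnd ->
      update env x i y <= (size w).+1.
    move=> i hi y; rewrite in_cons /update; case: (y == x) => //= hy; exact: Hv.
  by split=> hh i hi; apply/(E w _ (Hv' i hi)); apply: hh.
Qed.

Fixpoint tr2 (f : form A) : form A :=
  match f with
  | FLt t1 t2 => FI (fun _ => true) t1 t2
  | FP L t => FI L Min t
  | FNot g => FNot (tr2 g)
  | FAnd g h => FAnd (tr2 g) (tr2 h)
  | FOr g h => FOr (tr2 g) (tr2 h)
  | FEx x g => FEx x (tr2 g)
  | FAll x g => FAll x (tr2 g)
  | _ => f
  end.

Lemma tr2_sig f : in_sig_ltP G f -> in_sig_I G (tr2 f).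
Proof.
elim: f => //=; try by move=> *; exact: G_true.
- by move=> g IHg h IHh [/IHg ? /IHh ?].
- by move=> g IHg h IHh [/IHg ? /IHh ?].
Qed.

Lemma tr2_scoped f bnd : scoped bnd (tr2 f) = scoped bnd f.
Proof.
elim: f bnd => //=.
- by move=> g IHg h IHh bnd; rewrite IHg IHh.
- by move=> g IHg h IHh bnd; rewrite IHg IHh.
Qed.

Lemma tr2_sat f w env : sat w env (tr2 f) <-> sat w env f.
Proof.
elim: f env => //=.
- by move=> t1 t2 env; split=> [[]|].
- by move=> g IH env; rewrite IH.
- by move=> g IHg h IHh env; rewrite IHg IHh.
- by move=> g IHg h IHh env; rewrite IHg IHh.
- move=> x g IH env; split; case=> i [hi hs]; exists i; split=> //; exact/IH.
- by move=> x g IH env; split=> hh i hi; apply/IH; apply: hh.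
Qed.

End Trans.
End S.

Theorem lemma6p3 (A : finType) (G : lang A -> Prop) :
  group_prevariety G -> forall L : lang A, FO_I G L <-> FO_ltP G L.
Proof.
move=> HG L; split.
- case=> f [sig [sent def]].
  have [f' [sig' H]] := tr_I HG sig.
  have [sc E] := H [::] sent.
  exists f'; split=> //; split=> // w; rewrite def; apply: E => x.
  by rewrite in_nil.
- case=> f [sig [sent def]].
  exists (tr2 f); split; first exact: (tr2_sig HG sig).
  split; first by rewrite /sentence tr2_scoped.
  by move=> w; rewrite def tr2_sat.
Qed.
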